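(* Let $X$ be a space containing an open subspace $O$ that is almost zero-dimensional, with $O\neq\varnothing$ and $X\setminus O\neq\varnothing$. Then $X$ is not $\sigma$-connected; that is, either $X$ is not connected, or $X$ is the union of countably infinitely many pairwise disjoint non-empty closed subsets.
   Context: All spaces are separable and metrizable. A subset $A$ of $X$ is a C-set in $X$ if it is an intersection of clopen subsets of $X$. A space is almost zero-dimensional if every point has a neighborhood basis consisting of C-sets in it. A connected space is $\sigma$-connected if it cannot be written as the union of $\omega$-many (countably infinitely many) pairwise disjoint non-empty closed subsets. *)

(* Defs.v *)
(* separable metrizable spaces are given as a type with a metric. *)
From Stdlib Require Import Reals.
Open Scope R_scope.

Definition is_metric {X : Type} (d : X -> X -> R) : Prop :=
  (forall x y, 0 <= d x y) /\
  (forall x y, d x y = 0 <-> x = y) /\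
  (forall x y, d x y = d y x) /\
  (forall x y z, d x z <= d x y + d y z).

Definition countable_set {X : Type} (D : X -> Prop) : Prop :=
  exists f : X -> nat, forall x y, D x -> D y -> f x = f y -> x = y.

Definition separable {X : Type} (d : X -> X -> R) : Prop :=
  exists D : X -> Prop, countable_set D /\
    (forall x eps, 0 < eps -> exists y, D y /\ d x y < eps).

Definition is_open {X : Type} (d : X -> X -> R) (U : X -> Prop) : Prop :=
  forall x, U x -> exists eps, 0 < eps /\ forall y, d x y < eps -> U y.

Definition is_closed {X : Type} (d : X -> X -> R) (F : X -> Prop) : Prop :=
  is_open d (fun x => ~ F x).

Definition rel_open {X : Type} (d : X -> X -> R) (O U : X -> Prop) : Prop :=
  (forall x, U x -> O x) /\
  forall x, U x -> exists eps, 0 < eps /\ forall y, O y -> d x y < eps -> U y.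

Definition rel_closed {X : Type} (d : X -> X -> R) (O F : X -> Prop) : Prop :=
  (forall x, F x -> O x) /\ rel_open d O (fun x => O x /\ ~ F x).

Definition rel_clopen {X : Type} (d : X -> X -> R) (O B : X -> Prop) : Prop :=
  rel_open d O B /\ rel_closed d O B.

Definition C_set {X : Type} (d : X -> X -> R) (O A : X -> Prop) : Prop :=
  exists Fam : (X -> Prop) -> Prop,
    (forall B, Fam B -> rel_clopen d O B) /\
    (forall x, A x <-> (O x /\ forall B, Fam B -> B x)).

Definition almost_zero_dim {X : Type} (d : X -> X -> R) (O : X -> Prop) : Prop :=
  forall x, O x ->
    forall U, rel_open d O U -> U x ->
      exists A, C_set d O A /\ (forall y, A y -> U y) /\
        exists V, rel_open d O V /\ V x /\ (forall y, V y -> A y).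

Definition connected {X : Type} (d : X -> X -> R) : Prop :=
  ~ exists U V : X -> Prop,
      is_open d U /\ is_open d V /\ (exists x, U x) /\ (exists x, V x) /\
      (forall x, ~ (U x /\ V x)) /\ (forall x, U x \/ V x).

Definition sigma_connected {X : Type} (d : X -> X -> R) : Prop :=
  connected d /\
  ~ exists F : nat -> X -> Prop,
      (forall n, is_closed d (F n)) /\
      (forall n, exists x, F n x) /\
      (forall n m x, n <> m -> F n x -> F m x -> False) /\
      (forall x, exists n, F n x).

(* Main.v *)
Require Import Defs.
From Stdlib Require Import Reals Lra Lia Classical IndefiniteDescription Cantor.
Open Scope R_scope.

Lemma open_ext {X} (d : X -> X -> R) (U V : X -> Prop) :
  (forall x, U x <-> V x) -> is_open d U -> is_open d V.
Proof.
  intros E H x Vx. destruct (H x (proj2 (E x) Vx)) as [e [He Hb]].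
  exists e; split; auto. intros y Hy; apply E; auto.
Qed.

Lemma closed_ext {X} (d : X -> X -> R) (U V : X -> Prop) :
  (forall x, U x <-> V x) -> is_closed d U -> is_closed d V.
Proof.
  intros E H. unfold is_closed in *. apply (open_ext d (fun x => ~ U x)); auto.
  intro x; split; intros h1 h2; apply h1; apply E; auto.
Qed.

Lemma closed_union2 {X} (d : X -> X -> R) (F1 F2 : X -> Prop) :
  is_closed d F1 -> is_closed d F2 -> is_closed d (fun x => F1 x \/ F2 x).
Proof.
  unfold is_closed, is_open. intros H1 H2 x Hx.
  destruct (H1 x (fun h => Hx (or_introl h))) as [e1 [He1 B1]].
  destruct (H2 x (fun h => Hx (or_intror h))) as [e2 [He2 B2]].
  exists (Rmin e1 e2); split. apply Rmin_pos; auto.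
  intros y Hy [h|h].
  - apply (B1 y); auto. apply Rlt_le_trans with (1:=Hy); apply Rmin_l.
  - apply (B2 y); auto. apply Rlt_le_trans with (1:=Hy); apply Rmin_r.
Qed.

Lemma closed_empty {X} (d : X -> X -> R) : is_closed d (fun _ => False).
Proof. intros x _. exists 1; split; [lra| intros y _ h; exact h]. Qed.

Lemma closed_prop_and {X} (d : X -> X -> R) (Q : Prop) (F : X -> Prop) :
  is_closed d F -> is_closed d (fun x => Q /\ F x).
Proof.
  intro H. destruct (classic Q) as [q|nq].
  - apply (closed_ext d F); auto. intro x; tauto.
  - apply (closed_ext d (fun _ => False)). intro x; tauto. apply closed_empty.
Qed.

Lemma closed_interval_union {X} (d : X -> X -> R) (P : nat -> X -> Prop) :
  (forall n, is_closed d (P n)) -> forall a b,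
  is_closed d (fun x => exists n, (a <= n <= b)%nat /\ P n x).
Proof.
  intros HP a b. induction b.
  - apply (closed_ext d (fun x => (a <= 0)%nat /\ P 0%nat x)).
    + intro x; split. intros [h1 h2]; exists 0%nat; split; auto; lia.
      intros [n [h1 h2]]. assert (n = 0%nat) by lia. subst; split; auto; lia.
    + apply closed_prop_and; auto.
  - apply (closed_ext d (fun x => (exists n, (a <= n <= b)%nat /\ P n x) \/
                               ((a <= S b)%nat /\ P (S b) x))).
    + intro x; split.
      * intros [[n [h1 h2]]|[h1 h2]]. exists n; split; auto; lia. exists (S b); split; auto; lia.
      * intros [n [h1 h2]]. destruct (Nat.eq_dec n (S b)) as [e|e].
        subst; right; split; auto; lia. left; exists n; split; auto; lia.
    + apply closed_union2; auto. apply closed_prop_and; auto.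
Qed.

Lemma least_nat (P : nat -> Prop) : (exists n, P n) -> exists n, P n /\ forall k, (k < n)%nat -> ~ P k.
Proof.
  intros [n Hn]. revert Hn. induction n as [n IH] using (well_founded_induction Wf_nat.lt_wf). intro Hn.
  destruct (classic (exists k, (k < n)%nat /\ P k)) as [[k [hk pk]]|hn].
  - apply (IH k hk pk).
  - exists n; split; auto. intros k hk pk; apply hn; eauto.
Qed.

Lemma bounded_choice (P : nat -> nat -> Prop) : forall i,
  (forall j, (j < i)%nat -> exists k, P j k) ->
  exists m, forall j, (j < i)%nat -> exists k, (k <= m)%nat /\ P j k.
Proof.
  induction i; intro H.
  - exists 0%nat; intros j hj; lia.
  - destruct IHi as [m Hm]. intros j hj; apply H; lia.
    destruct (H i ltac:(lia)) as [k Hk].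
    exists (Nat.max m k). intros j hj.
    destruct (Nat.eq_dec j i) as [e|e].
    + subst; exists k; split; auto; lia.
    + destruct (Hm j ltac:(lia)) as [k' [h1 h2]]. exists k'; split; auto; lia.
Qed.

Lemma merge {X} (d : X -> X -> R) (P : nat -> X -> Prop) :
  (forall n, is_closed d (P n)) ->
  (forall n m x, n <> m -> P n x -> P m x -> False) ->
  (forall x, exists n, P n x) ->
  (forall N, exists n, (N <= n)%nat /\ exists x, P n x) ->
  exists F : nat -> X -> Prop,
      (forall n, is_closed d (F n)) /\
      (forall n, exists x, F n x) /\
      (forall n m x, n <> m -> F n x -> F m x -> False) /\
      (forall x, exists n, F n x).
Proof.
  intros Hc Hd Hcov Hinf.
  apply functional_choice in Hinf as [g Hg].
  set (t := fix t k := match k with 0%nat => g 0%nat | S k' => g (S (t k')) end).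
  set (lo := fun k => match k with 0%nat => 0%nat | S k' => S (t k') end).
  assert (Ht : forall k, (lo k <= t k)%nat).
  { intros [|k]; simpl. lia. apply (Hg (S (t k))). }
  assert (Hinc : forall k, (t k < t (S k))%nat).
  { intro k. simpl. pose proof (proj1 (Hg (S (t k)))). lia. }
  assert (Hmono : forall k m, (k < m)%nat -> (t k < lo m)%nat).
  { intros k m hkm. induction hkm.
    - simpl; lia.
    - simpl. simpl in IHhkm. specialize (Ht m). specialize (Hinc m). lia. }
  assert (Hge : forall k, (k <= t k)%nat).
  { induction k. lia. specialize (Hinc k). lia. }
  exists (fun k x => exists n, (lo k <= n <= t k)%nat /\ P n x).
  split; [|split; [|split]].
  - intro k. apply closed_interval_union; auto.
  - intro k. destruct k as [|k].
    + destruct (proj2 (Hg 0%nat)) as [x Hx]. exists x, (t 0%nat). split; [simpl; lia | exact Hx].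
    + destruct (proj2 (Hg (S (t k)))) as [x Hx]. exists x, (t (S k)). split; [|exact Hx].
      specialize (Ht (S k)); lia.
  - intros k m x hkm [n1 [h1 p1]] [n2 [h2 p2]].
    destruct (Nat.lt_total k m) as [l|[e|l]]; [| contradiction |].
    + specialize (Hmono k m l). apply (Hd n1 n2 x); auto; lia.
    + specialize (Hmono m k l). apply (Hd n1 n2 x); auto; lia.
  - intro x. destruct (Hcov x) as [n Hn].
    destruct (least_nat (fun k => (n <= t k)%nat)) as [k [hk hmin]].
    { exists n; auto. }
    exists k, n. split; auto. split; auto.
    destruct k as [|k]; simpl. lia.
    assert (~ (n <= t k)%nat) by (apply hmin; lia). lia.
Qed.

Lemma infinitely_many {X} (d : X -> X -> R) (P : nat -> X -> Prop) :
  connected d ->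
  (forall n, is_closed d (P n)) ->
  (forall n m x, n <> m -> P n x -> P m x -> False) ->
  (forall x, exists n, P n x) ->
  (exists x, P 0%nat x) -> (exists n x, n <> 0%nat /\ P n x) ->
  forall N, exists n, (N <= n)%nat /\ exists x, P n x.
Proof.
  intros Hconn Hc Hd Hcov [x0 H0] [n1 [x1 [hn1 H1]]] N.
  apply NNPP; intro HN. apply Hconn.
  assert (Hemp : forall n x, (N <= n)%nat -> ~ P n x).
  { intros n x hn px; apply HN; eauto. }
  exists (P 0%nat), (fun x => ~ P 0%nat x).
  split; [|split; [|split; [|split; [|split]]]].
  - pose proof (closed_interval_union d P Hc 1 N) as HW.
    unfold is_closed in HW. apply (open_ext d _ _ ) with (2 := HW).
    intro x; split.
    + intro h. destruct (Hcov x) as [n Hn]. destruct (Nat.eq_dec n 0) as [e|e].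
      subst; auto. exfalso; apply h. exists n. split; auto.
      destruct (Compare_dec.le_lt_dec N n) as [l|l]. exfalso; apply (Hemp n x l Hn). lia.
    + intros h [n [hn pn]]. apply (Hd 0%nat n x); auto. lia.
  - apply Hc.
  - eauto.
  - exists x1. intro h; apply (Hd n1 0%nat x1); auto.
  - intros x [a b]; auto.
  - intro x; apply classic.
Qed.
Definition OC {X} (d : X -> X -> R) (O R0 : X -> Prop) : Prop :=
  forall x, O x -> ~ R0 x -> exists e, 0 < e /\ forall y, d x y < e -> ~ R0 y.

Lemma OC_closed {X} d (O F : X -> Prop) : is_closed d F -> OC d O F.
Proof. intros H x _ nx. exact (H x nx). Qed.

Lemma OC_open_compl {X} d (O U : X -> Prop) : is_open d U -> OC d O (fun y => ~ U y).
Proof.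
  intros H x _ nx. apply NNPP in nx. destruct (H x nx) as [e [he hb]].
  exists e; split; [exact he|]. intros y hy h; apply h; auto.
Qed.

Lemma OC_and {X} d (O F1 F2 : X -> Prop) : OC d O F1 -> OC d O F2 -> OC d O (fun y => F1 y /\ F2 y).
Proof.
  intros H1 H2 x Ox nx. destruct (classic (F1 x)) as [f1|f1].
  - assert (~ F2 x) by tauto. destruct (H2 x Ox H) as [e [he hb]].
    exists e; split; auto. intros y hy [_ h]; apply (hb y); auto.
  - destruct (H1 x Ox f1) as [e [he hb]].
    exists e; split; auto. intros y hy [h _]; apply (hb y); auto.
Qed.

Lemma OC_or {X} d (O F1 F2 : X -> Prop) : OC d O F1 -> OC d O F2 -> OC d O (fun y => F1 y \/ F2 y).
Proof.
  intros H1 H2 x Ox nx.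
  destruct (H1 x Ox (fun h => nx (or_introl h))) as [e1 [He1 B1]].
  destruct (H2 x Ox (fun h => nx (or_intror h))) as [e2 [He2 B2]].
  exists (Rmin e1 e2); split. apply Rmin_pos; auto.
  intros y Hy [h|h].
  - apply (B1 y); auto. apply Rlt_le_trans with (1:=Hy); apply Rmin_l.
  - apply (B2 y); auto. apply Rlt_le_trans with (1:=Hy); apply Rmin_r.
Qed.

Lemma OC_forall {X} {I : Type} d (O : X -> Prop) (F : I -> X -> Prop) :
  (forall i, OC d O (F i)) -> OC d O (fun y => forall i, F i y).
Proof.
  intros H x Ox nx. apply not_all_ex_not in nx as [i hi].
  destruct (H i x Ox hi) as [e [he hb]]. exists e; split; auto.
  intros y hy h; apply (hb y hy); auto.
Qed.

Lemma OC_prop_imp {X} d (O F : X -> Prop) (Q : Prop) : OC d O F -> OC d O (fun y => Q -> F y).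
Proof.
  intros H x Ox nx. destruct (classic Q) as [q|q].
  - destruct (H x Ox (fun h => nx (fun _ => h))) as [e [he hb]].
    exists e; split; auto. intros y hy h; apply (hb y hy); auto.
  - exfalso; apply nx; intro; contradiction.
Qed.

Lemma OC_prop_or {X} d (O F : X -> Prop) (Q : Prop) : OC d O F -> OC d O (fun y => Q \/ F y).
Proof.
  intros H x Ox nx. destruct (H x Ox (fun h => nx (or_intror h))) as [e [he hb]].
  exists e; split; auto. intros y hy [h|h]. apply nx; auto. apply (hb y hy); auto.
Qed.

Lemma OC_false {X} d (O : X -> Prop) : OC d O (fun _ => False).
Proof. intros x _ _. exists 1; split; [lra| intros y _ h; exact h]. Qed.

Lemma OC_ext {X} d (O F G : X -> Prop) : (forall y, F y <-> G y) -> OC d O F -> OC d O G.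
Proof.
  intros E H x Ox nx. destruct (H x Ox (fun h => nx (proj1 (E x) h))) as [e [he hb]].
  exists e; split; auto. intros y hy h; apply (hb y hy); apply E; auto.
Qed.

Lemma OC_ex_le {X} d (O : X -> Prop) (F : nat -> X -> Prop) :
  (forall k, OC d O (F k)) -> forall m, OC d O (fun y => exists k, (k <= m)%nat /\ F k y).
Proof.
  intros H m. induction m.
  - apply (OC_ext d O (F 0%nat)); auto. intro y; split.
    intro h; exists 0%nat; split; auto. intros [k [hk h]]. assert (k = 0%nat) by lia; subst; auto.
  - apply (OC_ext d O (fun y => (exists k, (k <= m)%nat /\ F k y) \/ F (S m) y)).
    + intro y; split. intros [[k [hk h]]|h]. exists k; split; auto. exists (S m); auto.
      intros [k [hk h]]. destruct (Nat.eq_dec k (S m)) as [e|e]. subst; auto.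
      left; exists k; split; auto; lia.
    + apply OC_or; auto.
Qed.

Lemma OC_ex_lt {X} d (O : X -> Prop) (F : nat -> X -> Prop) :
  (forall k, OC d O (F k)) -> forall i, OC d O (fun y => exists k, (k < i)%nat /\ F k y).
Proof.
  intros H [|i].
  - apply (OC_ext d O (fun _ => False)). intro y; split. tauto. intros [k [hk _]]; lia.
    apply OC_false.
  - apply (OC_ext d O (fun y => exists k, (k <= i)%nat /\ F k y)).
    intro y; split; intros [k [hk h]]; exists k; split; auto; lia.
    apply OC_ex_le; auto.
Qed.

Lemma relopen_open {X} (d : X -> X -> R) (O U : X -> Prop) :
  is_open d O -> rel_open d O U -> is_open d U.
Proof.
  intros HO [HUO HU] x Ux. destruct (HU x Ux) as [e1 [he1 hb1]].
  destruct (HO x (HUO x Ux)) as [e2 [he2 hb2]].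
  exists (Rmin e1 e2); split. apply Rmin_pos; auto.
  intros y hy. apply hb1. apply hb2. apply Rlt_le_trans with (1:=hy); apply Rmin_r.
  apply Rlt_le_trans with (1:=hy); apply Rmin_l.
Qed.

Lemma lindelof {X} (d : X -> X -> R) : is_metric d -> separable d ->
  forall P : (X -> Prop) -> Prop, (forall U, P U -> is_open d U) -> (exists U, P U) ->
  exists s : nat -> X -> Prop, (forall n, P (s n)) /\
     forall x U, P U -> U x -> exists n, s n x.
Proof.
  intros [Hpos [Hz [Hsym Htri]]] [D [[f Hf] Hdense]] P HPo [U0 HU0].
  set (good := fun (n : nat) (U : X -> Prop) => P U /\ exists q, D q /\ f q = fst (of_nat n) /\
                  forall y, d q y < / INR (S (snd (of_nat n))) -> U y).
  assert (Hc : forall n, exists U, P U /\ ((exists U', good n U') -> good n U)).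
  { intro n. destruct (classic (exists U', good n U')) as [[U' HU']|HN].
    - exists U'. split; [apply HU'| auto].
    - exists U0. split; auto. intro h; contradiction. }
  apply functional_choice in Hc as [s Hs].
  exists s. split. { intro n; apply (proj1 (Hs n)). }
  intros x U HU Ux.
  destruct (HPo U HU x Ux) as [e [He Hb]].
  destruct (archimed_cor1 (e/2)) as [N [HN HN0]]. lra.
  destruct N as [|m]. lia.
  assert (HNp : 0 < / INR (S m)). { apply Rinv_0_lt_compat. apply lt_0_INR; lia. }
  destruct (Hdense x (/ INR (S m)) HNp) as [q [Dq Hxq]].
  set (n := to_nat (f q, m)).
  assert (Hon : of_nat n = (f q, m)) by apply cancel_of_to.
  assert (Hg : good n U).
  { split; auto. exists q. rewrite Hon; cbn [fst snd]. split; auto. split; auto.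
    intros y hy. cbn [fst snd] in hy. apply Hb. pose proof (Htri x q y) as H. set (r := / INR (S m)) in *. lra. }
  destruct (proj2 (Hs n) (ex_intro _ U Hg)) as [_ [q' [Dq' [hf hb]]]].
  rewrite Hon in hf, hb; simpl in hf, hb.
  assert (q' = q) by (apply Hf; auto). subst q'.
  exists n. apply hb. rewrite Hsym; auto.
Qed.

Lemma local_cset {X} (d : X -> X -> R) (O : X -> Prop) : is_metric d -> is_open d O ->
  almost_zero_dim d O -> forall z, O z ->
  exists W, (is_open d W /\ exists A, C_set d O A /\ is_closed d A /\ forall y, W y -> A y) /\ W z.
Proof.
  intros [Hpos [Hz [Hsym Htri]]] HO Haz z Oz.
  destruct (HO z Oz) as [eps [heps hball]].
  set (e := eps / 2).
  set (U := fun y => O y /\ d z y < e).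
  assert (HU : rel_open d O U).
  { split. intros x [h _]; auto.
    intros x [Ox hx]. exists (e - d z x). split. lra.
    intros y Oy hy. split; auto. pose proof (Htri z x y). lra. }
  assert (HUz : U z). { split; auto. rewrite (proj2 (Hz z z) eq_refl). unfold e; lra. }
  destruct (Haz z Oz U HU HUz) as [A [HC [HAU [V [HV [Vz HVA]]]]]].
  exists V. split; [|exact Vz]. split. apply (relopen_open d O V HO HV).
  exists A. split; [exact HC|]. split; [|exact HVA].
  destruct HC as [Fam [HFam HA]].
  intros x nAx. destruct (classic (O x)) as [Ox|nOx].
  - assert (exists B, Fam B /\ ~ B x) as [B [FB nB]].
    { apply NNPP; intro hn. apply nAx. apply HA. split; auto.
      intros B FB. apply NNPP; intro nb. apply hn; eauto. }
    destruct (HFam B FB) as [_ [_ [_ Hrc]]].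
    destruct (Hrc x (conj Ox nB)) as [e1 [he1 hb1]].
    destruct (HO x Ox) as [e2 [he2 hb2]].
    exists (Rmin e1 e2); split. apply Rmin_pos; auto.
    intros y hy Ay. assert (Oy : O y). { apply hb2. apply Rlt_le_trans with (1:=hy); apply Rmin_r. }
    destruct (hb1 y Oy) as [_ nBy]. apply Rlt_le_trans with (1:=hy); apply Rmin_l.
    apply nBy. apply (proj1 (HA y) Ay); auto.
  - exists e. split. unfold e; lra.
    intros y hy Ay. apply nOx. apply hball.
    destruct (HAU y Ay) as [_ h]. pose proof (Htri z y x). rewrite (Hsym y x) in H. unfold e in *; lra.
Qed.

Lemma cset_seq {X} (d : X -> X -> R) (O A : X -> Prop) : is_metric d -> separable d ->
  is_open d O -> C_set d O A ->
  exists s : nat -> X -> Prop, (forall k, is_open d (s k)) /\ (forall k, OC d O (s k)) /\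
    forall z, A z <-> (O z /\ forall k, ~ s k z).
Proof.
  intros Hm Hsep HO [Fam [HFam HA]].
  set (P := fun W : X -> Prop => (forall x, ~ W x) \/ exists B, Fam B /\ forall x, W x <-> (O x /\ ~ B x)).
  assert (HPo : forall W, P W -> is_open d W).
  { intros W [h|[B [FB h]]].
    - intros x Wx; exfalso; apply (h x Wx).
    - apply (open_ext d (fun x => O x /\ ~ B x)). intro x; rewrite h; tauto.
      apply (relopen_open d O); auto. apply (HFam B FB). }
  destruct (lindelof d Hm Hsep P HPo) as [s [Hs Hcov]].
  { exists (fun _ => False). left; auto. }
  exists s. split; [|split].
  - intro k; apply HPo; auto.
  - intro k. destruct (Hs k) as [h|[B [FB h]]].
    + intros x _ _. exists 1; split; [lra|]. intros y _; apply h.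
    + intros x Ox nx. assert (Bx : B x). { apply NNPP; intro nb; apply nx; apply h; auto. }
      destruct (HFam B FB) as [[_ Hro] _].
      destruct (Hro x Bx) as [e1 [he1 hb1]].
      destruct (HO x Ox) as [e2 [he2 hb2]].
      exists (Rmin e1 e2); split. apply Rmin_pos; auto.
      intros y hy sy. destruct (proj1 (h y) sy) as [Oy nBy]. apply nBy. apply hb1; auto.
      apply Rlt_le_trans with (1:=hy); apply Rmin_l.
  - intro z. split.
    + intro Az. pose proof (proj1 (HA z) Az) as [Oz HB]. split; auto.
      intros k sk. destruct (Hs k) as [h|[B [FB h]]]. apply (h z sk).
      destruct (proj1 (h z) sk) as [_ nb]. exact (nb (HB B FB)).
    + intros [Oz Hk]. apply HA. split; auto. intros B FB. apply NNPP; intro nb.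
      destruct (Hcov z (fun x => O x /\ ~ B x)) as [k hk].
      right; exists B; split; auto; tauto. split; auto.
      apply (Hk k hk).
Qed.

Theorem theorem4p11 (X : Type) (d : X -> X -> R)
  (Hmet : is_metric d) (Hsep : separable d)
  (O : X -> Prop) (HOopen : is_open d O) (HOazd : almost_zero_dim d O)
  (HOne : exists x, O x) (HcOne : exists x, ~ O x) :
  ~ sigma_connected d.
Proof.
  intros [Hconn Hno]. apply Hno.
  destruct (lindelof d Hmet Hsep (fun W => is_open d W /\ exists A, C_set d O A /\ is_closed d A /\ forall y, W y -> A y) (fun U h => proj1 h)) as [s1 [Hs1 Hs1c]].
  { destruct HOne as [x0 Hx0]. destruct (local_cset d O Hmet HOopen HOazd x0 Hx0) as [W [HW _]]. eauto. }
  assert (HA : forall i, exists A, C_set d O A /\ is_closed d A /\ forall y, s1 i y -> A y)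
    by (intro i; apply (proj2 (Hs1 i))).
  apply functional_choice in HA as [A HA].
  assert (HS : forall i, exists s : nat -> X -> Prop, (forall k, is_open d (s k)) /\
     (forall k, OC d O (s k)) /\ forall z, A i z <-> (O z /\ forall k, ~ s k z)).
  { intro i. apply cset_seq; auto. apply (HA i). }
  apply functional_choice in HS as [S HS].
  assert (HAcov : forall z, O z -> exists i, A i z).
  { intros z Oz. destruct (local_cset d O Hmet HOopen HOazd z Oz) as [W [HW Wz]].
    destruct (Hs1c z W HW Wz) as [i hi]. exists i. apply (HA i); auto. }
  assert (HAO : forall i z, A i z -> O z).
  { intros i z h. apply (proj1 (proj2 (proj2 (HS i)) z) h). }
  set (Q := fun i m z => forall j, (j < i)%nat -> exists k, (k <= m)%nat /\ S j k z).
  set (Fib := fun i m z => A i z /\ Q i m z /\ (m = 0%nat \/ ~ Q i (pred m) z)).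
  assert (HQmono : forall i m m' z, (m <= m')%nat -> Q i m z -> Q i m' z).
  { intros i m m' z hm hq j hj. destruct (hq j hj) as [k [hk h]]. exists k; split; auto; lia. }
  assert (HFcl : forall i m, is_closed d (Fib i m)).
  { intros i m x nx. destruct (classic (A i x)) as [Ax|nAx].
    - assert (Ox : O x) by (apply (HAO i); auto).
      assert (HOC : OC d O (fun z => Q i m z /\ (m = 0%nat \/ ~ Q i (pred m) z))).
      { apply OC_and.
        - apply OC_forall. intro j. apply OC_prop_imp. apply OC_ex_le. intro k.
          apply (proj1 (proj2 (HS j))).
        - apply OC_prop_or.
          apply (OC_ext d O (fun z => exists j, (j < i)%nat /\ forall k, (k <= pred m)%nat -> ~ S j k z)).
          + intro z; unfold Q; split.
            * intros [j [hj hk]] hq. destruct (hq j hj) as [k [hk' sk]]. apply (hk k hk' sk).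
            * intro hq. apply NNPP; intro hn. apply hq. intros j hj. apply NNPP; intro hn2.
              apply hn. exists j; split; auto. intros k hk sk. apply hn2; eauto.
          + apply OC_ex_lt. intro j. apply OC_forall. intro k. apply OC_prop_imp.
            apply OC_open_compl. apply (proj1 (HS j)). }
      destruct (HOC x Ox) as [e [he hb]].
      { intros [q r]; apply nx; split; auto. }
      exists e; split; [exact he|]. intros y hy [_ [q r]]. apply (hb y hy); auto.
    - destruct (proj1 (proj2 (HA i)) x nAx) as [e [he hb]]. exists e; split; [exact he|].
      intros y hy [Ay _]. apply (hb y hy Ay). }
  assert (HFd : forall i m i' m' z, Fib i m z -> Fib i' m' z -> i = i' /\ m = m').
  { intros i m i' m' z [A1 [Q1 R1]] [A2 [Q2 R2]].
    assert (Hi : i = i').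
    { destruct (Nat.lt_total i i') as [l|[e|l]]; auto; exfalso.
      - destruct (Q2 i l) as [k [_ hk]]. apply (proj2 (proj1 (proj2 (proj2 (HS i)) z) A1) k hk).
      - destruct (Q1 i' l) as [k [_ hk]]. apply (proj2 (proj1 (proj2 (proj2 (HS i')) z) A2) k hk). }
    subst i'. split; auto.
    destruct (Nat.lt_total m m') as [l|[e|l]]; auto; exfalso.
    - destruct R2 as [h|h]. lia. apply h. apply (HQmono i m); auto; lia.
    - destruct R1 as [h|h]. lia. apply h. apply (HQmono i m'); auto; lia. }
  assert (HFcov : forall z, O z -> exists i m, Fib i m z).
  { intros z Oz. destruct (least_nat (fun i => A i z) (HAcov z Oz)) as [i [Ai hmin]].
    assert (Hex : exists m, Q i m z).
    { apply (bounded_choice (fun j k => S j k z)). intros j hj.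
      assert (nA : ~ A j z) by (apply hmin; auto).
      apply NNPP; intro hn. apply nA. apply (proj2 (proj2 (HS j)) z). split; auto.
      intros k sk; apply hn; eauto. }
    destruct (least_nat (fun m => Q i m z) Hex) as [m [Qm mmin]].
    exists i, m. split; auto. split; auto.
    destruct m; [left; auto | right; apply mmin; simpl; lia]. }
  set (Pc := fun n x => match n with 0%nat => ~ O x | Datatypes.S p => Fib (fst (of_nat p)) (snd (of_nat p)) x end).
  assert (HPc : forall n, is_closed d (Pc n)).
  { intros [|p].
    - intros x nnx. apply NNPP in nnx. destruct (HOopen x nnx) as [e [he hb]].
      exists e; split; [exact he|]. intros y hy h; apply h; auto.
    - apply HFcl. }
  assert (HPd : forall n m x, n <> m -> Pc n x -> Pc m x -> False).
  { intros [|p] [|p'] x hne h1 h2.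
    - apply hne; auto.
    - apply h1. destruct h2 as [h _]. apply (HAO _ _ h).
    - apply h2. destruct h1 as [h _]. apply (HAO _ _ h).
    - destruct (HFd _ _ _ _ x h1 h2) as [e1 e2]. apply hne. f_equal.
      rewrite <- (cancel_to_of p), <- (cancel_to_of p').
      rewrite (surjective_pairing (of_nat p)), (surjective_pairing (of_nat p')), e1, e2.
      reflexivity. }
  assert (HPcov : forall x, exists n, Pc n x).
  { intro x. destruct (classic (O x)) as [Ox|nOx].
    - destruct (HFcov x Ox) as [i [m h]]. exists (Datatypes.S (to_nat (i,m))).
      change (Fib (fst (of_nat (to_nat (i,m)))) (snd (of_nat (to_nat (i,m)))) x).
      rewrite cancel_of_to. exact h.
    - exists 0%nat; exact nOx. }
  apply (merge d Pc HPc HPd HPcov).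
  apply (infinitely_many d Pc Hconn HPc HPd HPcov).
  - destruct HcOne as [x hx]; exists x; exact hx.
  - destruct HOne as [x Ox]. destruct (HFcov x Ox) as [i [m h]].
    exists (Datatypes.S (to_nat (i,m))), x. split; [discriminate|].
    change (Fib (fst (of_nat (to_nat (i,m)))) (snd (of_nat (to_nat (i,m)))) x).
    rewrite cancel_of_to. exact h.
Qed.
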